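(* Let $R$ be a Noetherian ring, $I\subseteq R$ an ideal, and $J_1=(f_1,\ldots,f_m)\subseteq I$, $J_2=(g_1,\ldots,g_m)\subseteq I$ ideals with $f_i-g_i\in I^2$ for $i=1,\ldots,m$, and assume $J_1\subseteq I$ is Aluffi torsion-free. Let $\mathcal Z_1,\mathcal Z_2\subseteq R^m$ be the syzygy modules of $(f_1,\dots,f_m)$ and $(g_1,\dots,g_m)$. Then $J_2\subseteq I$ is Aluffi torsion-free if and only if $\mathcal Z_1^*=\mathcal Z_2^*$ in $\mathrm{gr}_I(R^m)$.
   Context: A pair of ideals $J\subseteq I$ in a ring $R$ is called Aluffi torsion-free if $J\cap I^n=JI^{n-1}$ for all $n\ge1$ (with $I^0=R$). $\mathrm{gr}_I(R^m)=\bigoplus_{n\ge0}I^nR^m/I^{n+1}R^m$. For $0\ne a\in R^m$ let $n$ be the largest integer with $a\in I^nR^m$ (if it exists), and $a^*$ the class of $a$ in $I^nR^m/I^{n+1}R^m$ (and $a^*=0$ if $a\in\bigcap_n I^nR^m$). For a submodule $\mathcal Z\subseteq R^m$, its form module $\mathcal Z^*$ is the graded $\mathrm{gr}_I(R)$-submodule of $\mathrm{gr}_I(R^m)$ generated by $\{a^*:a\in\mathcal Z\}$. The syzygy module of $(f_1,\dots,f_m)$ is $\{(a_1,\ldots,a_m)\in R^m:\sum a_if_i=0\}$. *)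

(* Defs.v *)
From HB Require Import structures.
From mathcomp Require Import all_boot all_order all_algebra.
From Stdlib Require List.
Set Implicit Arguments. Unset Strict Implicit. Unset Printing Implicit Defensive.
Import GRing.Theory.
Local Open Scope ring_scope.

Section Defs.
Variable R : comPzRingType.

Definition is_ideal (I : R -> Prop) : Prop :=
  [/\ I 0, (forall x y, I x -> I y -> I (x + y)) & (forall r x, I x -> I (r * x))].

Definition noetherian : Prop :=
  forall c : nat -> R -> Prop, (forall n, is_ideal (c n)) ->
    (forall n x, c n x -> c n.+1 x) ->
    exists N, forall n x, (N <= n)%N -> c n x -> c N x.

Definition prod_ideal (A B : R -> Prop) (x : R) : Prop :=
  exists s : seq (R * R), (forall p, p \in s -> A p.1 /\ B p.2) /\
    x = \sum_(p <- s) p.1 * p.2.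

Fixpoint ideal_pow (I : R -> Prop) (n : nat) : R -> Prop :=
  match n with
  | 0 => fun _ => True
  | n'.+1 => prod_ideal (ideal_pow I n') I
  end.

Definition gen_ideal (m : nat) (f : 'I_m -> R) (x : R) : Prop :=
  exists r : 'I_m -> R, x = \sum_i r i * f i.

Definition aluffi_tf (J I : R -> Prop) : Prop :=
  forall n, (0 < n)%N -> forall x, (J x /\ ideal_pow I n x) <-> prod_ideal J (ideal_pow I n.-1) x.

Definition syzygy (m : nat) (f : 'I_m -> R) (a : 'I_m -> R) : Prop :=
  \sum_i a i * f i = 0.

Definition vpow (I : R -> Prop) (m n : nat) (a : 'I_m -> R) : Prop :=
  forall i, ideal_pow I n (a i).

(* Homogeneous degree-n component of the form module Z^* in gr_I(R^m):
   x (with x ∈ I^n R^m) represents a class in I^n R^m / I^(n+1) R^m lying in Z^*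
   iff that class is a finite sum of products r^* a^*, with r ∈ I^k (class of degree k
   in gr_I(R)) and a ∈ Z whose initial form a^* has degree exactly n-k
   (a ∈ I^(n-k) R^m, a ∉ I^(n-k+1) R^m). *)
Definition form_module (I : R -> Prop) (m : nat) (Z : ('I_m -> R) -> Prop)
    (n : nat) (x : 'I_m -> R) : Prop :=
  vpow I n x /\
  exists s : seq (nat * R * ('I_m -> R)),
    (forall t, List.In t s ->
       [/\ (t.1.1 <= n)%N, ideal_pow I t.1.1 t.1.2, Z t.2,
           vpow I (n - t.1.1) t.2 & ~ vpow I (n - t.1.1).+1 t.2]) /\
    vpow I n.+1 (fun i => x i - \sum_(t <- s) t.1.2 * t.2 i).

End Defs.

(* Main.v *)
Require Import Defs.
From HB Require Import structures.
From mathcomp Require Import all_boot all_order all_algebra.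
From Stdlib Require Import Classical.
Import GRing.Theory.
Local Open Scope ring_scope.

Lemma prod_ideal_is_ideal (R : comPzRingType) (A B : R -> Prop) :
  (forall r x, A x -> A (r * x)) -> is_ideal (prod_ideal A B).
Proof.
move=> hA; split.
- by exists [::]; split => //; rewrite big_nil.
- move=> x y [s [hs ->]] [t [ht ->]]; exists (s ++ t); split; last by rewrite big_cat.
  by move=> p; rewrite mem_cat => /orP [] ?; [apply: hs | apply: ht].
- move=> r x [s [hs ->]]; exists [seq (r * p.1, p.2) | p <- s]; split.
  + move=> p /mapP [q qs ->] /=; have [h1 h2] := hs q qs; split => //; exact: hA.
  + by rewrite big_map mulr_sumr; apply: eq_bigr => p _ /=; rewrite mulrA.
Qed.

Lemma ideal_pow_scal (R : comPzRingType) (I : R -> Prop) n r x :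
  ideal_pow I n x -> ideal_pow I n (r * x).
Proof.
elim: n r x => [//|n IH] r x /=.
by case: (@prod_ideal_is_ideal _ (ideal_pow I n) I IH) => _ _ h; apply: h.
Qed.

Lemma ideal_pow_is_ideal (R : comPzRingType) (I : R -> Prop) n :
  is_ideal (ideal_pow I n).
Proof.
case: n => [|n] /=; first by split.
by apply: prod_ideal_is_ideal => r x; apply: ideal_pow_scal.
Qed.

Lemma ideal_sum (R : comPzRingType) (J : R -> Prop) (T : Type) (s : seq T)
   (P : pred T) (F : T -> R) :
  is_ideal J -> (forall i, P i -> J (F i)) -> J (\sum_(i <- s | P i) F i).
Proof.
move=> [h0 hD hM] hF; apply: big_ind => //.
Qed.

Lemma ideal_sub (R : comPzRingType) (J : R -> Prop) x y :
  is_ideal J -> J x -> J y -> J (x - y).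
Proof. by move=> [h0 hD hM] hx hy; apply: hD => //; rewrite -mulN1r; apply: hM. Qed.

Lemma ideal_pow_mul (R : comPzRingType) (I : R -> Prop) a b x y :
  ideal_pow I a x -> ideal_pow I b y -> ideal_pow I (a + b) (x * y).
Proof.
move=> hx; elim: b y => [|b IH] y hy.
  by rewrite addn0 mulrC; apply: ideal_pow_scal.
rewrite addnS /=; case: hy => [s [hs ->]].
exists [seq (x * p.1, p.2) | p <- s]; split.
- move=> p /mapP [q qs ->] /=; have [h1 h2] := hs q qs; split => //; exact: IH.
- by rewrite big_map mulr_sumr; apply: eq_bigr => p _ /=; rewrite mulrA.
Qed.

Lemma ideal_pow_S (R : comPzRingType) (I : R -> Prop) n x :
  ideal_pow I n.+1 x -> ideal_pow I n x.
Proof.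
elim: n x => [//|n IH] x /= [s [hs ->]]; exists s; split => // p ps.
by have [h1 h2] := hs p ps; split => //; apply: IH.
Qed.

Lemma ideal_pow_le (R : comPzRingType) (I : R -> Prop) k n x :
  (k <= n)%N -> ideal_pow I n x -> ideal_pow I k x.
Proof.
move=> hk; rewrite -(subnKC hk); elim: (n - k)%N x => [|d IH] x; first by rewrite addn0.
by rewrite addnS => /ideal_pow_S; apply: IH.
Qed.

Lemma ideal_pow1 (R : comPzRingType) (I : R -> Prop) x : I x -> ideal_pow I 1 x.
Proof.
move=> hx; exists [:: (1, x)]; split; last by rewrite big_seq1 mul1r.
by move=> p; rewrite inE => /eqP -> /=.
Qed.

Lemma gen_ideal_is_ideal (R : comPzRingType) m (f : 'I_m -> R) :
  is_ideal (gen_ideal f).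
Proof.
split.
- by exists (fun _ => 0); rewrite big1 // => i _; rewrite mul0r.
- move=> x y [r ->] [r' ->]; exists (fun i => r i + r' i).
  by rewrite -big_split; apply: eq_bigr => i _; rewrite mulrDl.
- move=> s x [r ->]; exists (fun i => s * r i).
  by rewrite mulr_sumr; apply: eq_bigr => i _; rewrite mulrA.
Qed.

Lemma gen_f (R : comPzRingType) m (f : 'I_m -> R) i : gen_ideal f (f i).
Proof.
exists (fun j => (j == i)%:R); rewrite (bigD1 i) //= eqxx mul1r big1 ?addr0 //.
by move=> j /negbTE ->; rewrite mul0r.
Qed.

Lemma prod_gen_decomp (R : comPzRingType) m (f : 'I_m -> R) (B : R -> Prop) y :
  is_ideal B -> prod_ideal (gen_ideal f) B y ->
  exists b : 'I_m -> R, (forall i, B (b i)) /\ y = \sum_i b i * f i.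
Proof.
move=> hB [s [hs ->]]; elim: s hs => [|p s IH] hs.
  exists (fun _ => 0); split; first by case: hB.
  by rewrite big_nil big1 // => i _; rewrite mul0r.
have [[c hc] hp2] := hs p (mem_head _ _).
rewrite big_cons.
have [b [hb ->]] : exists b : 'I_m -> R, (forall i, B (b i)) /\ \sum_(q <- s) q.1 * q.2 = \sum_i b i * f i.
  by apply: IH => q qs; apply: hs; rewrite in_cons qs orbT.
exists (fun i => p.2 * c i + b i); split.
  move=> i; case: hB => _ hD hM; apply: hD => //; rewrite mulrC; exact: hM.
rewrite hc mulr_suml -big_split; apply: eq_bigr => i _.
by rewrite mulrDl [c i * f i * _]mulrC mulrA.
Qed.

Lemma sum_syz (R : comPzRingType) m (f : 'I_m -> R) (s : seq (nat * R * ('I_m -> R))) :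
  (forall t, List.In t s -> syzygy f t.2) ->
  \sum_i (\sum_(t <- s) t.1.2 * t.2 i) * f i = 0.
Proof.
elim: s => [|t s IH] hs.
  by rewrite big1 // => i _; rewrite big_nil mul0r.
under eq_bigr do rewrite big_cons mulrDl.
rewrite big_split /= IH; last by move=> u hu; apply: hs; right.
have := hs t (or_introl erefl); rewrite /syzygy => h.
under eq_bigr do rewrite -mulrA.
by rewrite -mulr_sumr h mulr0 addr0.
Qed.

Lemma formS (R : comPzRingType) (I : R -> Prop) m (f : 'I_m -> R) n x :
  (forall i, I (f i)) -> form_module I (syzygy f) n x ->
  vpow I n x /\ ideal_pow I n.+2 (\sum_i x i * f i).
Proof.
move=> hf [hx [s [hs hr]]]; split => //.
have -> : \sum_i x i * f i = \sum_i (x i - \sum_(t <- s) t.1.2 * t.2 i) * f i.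
  under [RHS]eq_bigr do rewrite mulrBl.
  by rewrite sumrB sum_syz ?subr0 // => t /hs [].
apply: ideal_sum; first exact: ideal_pow_is_ideal.
move=> i _; rewrite -addn1; apply: ideal_pow_mul; first exact: hr.
exact: ideal_pow1.
Qed.

Lemma Cfg (R : comPzRingType) (I : R -> Prop) m (f g : 'I_m -> R) n x :
  (forall i, ideal_pow I 2 (f i - g i)) -> vpow I n x ->
  ideal_pow I n.+2 (\sum_i x i * f i) -> ideal_pow I n.+2 (\sum_i x i * g i).
Proof.
move=> hfg hx hs.
have -> : \sum_i x i * g i = \sum_i x i * f i - \sum_i x i * (f i - g i).
  by rewrite -sumrB; apply: eq_bigr => i _; rewrite mulrBr opprB addrC subrK.
apply: ideal_sub => //; first exact: ideal_pow_is_ideal.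
apply: ideal_sum; first exact: ideal_pow_is_ideal.
by move=> i _; rewrite -addn2; apply: ideal_pow_mul.
Qed.

Lemma Sform (R : comPzRingType) (I : R -> Prop) m (f : 'I_m -> R) n x :
  aluffi_tf (gen_ideal f) I -> vpow I n x ->
  ideal_pow I n.+2 (\sum_i x i * f i) -> form_module I (syzygy f) n x.
Proof.
move=> hA hx hs.
have hy : prod_ideal (gen_ideal f) (ideal_pow I n.+1) (\sum_i x i * f i).
  by apply: (proj1 (hA n.+2 erefl _)); split => //; exists x.
have [b [hb hbe]] := @prod_gen_decomp _ _ f _ _ (ideal_pow_is_ideal _ I n.+1) hy.
set a := fun i => x i - b i.
split => //.
case: (classic (vpow I n.+1 a)) => ha.
  exists [::]; split => // i; rewrite big_nil subr0.
  have -> : x i = a i + b i by rewrite /a subrK.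
  by case: (ideal_pow_is_ideal _ I n.+1) => _ hD _; apply: hD.
exists [:: ((0%N, 1 : R), a)]; split.
  move=> t [<-|[]] /=; split => //; rewrite ?subn0 //.
  - rewrite /syzygy /a; under eq_bigr do rewrite mulrBl.
    by rewrite sumrB -hbe subrr.
  - move=> i; apply: ideal_sub => //; first exact: ideal_pow_is_ideal.
    exact: ideal_pow_S.
move=> i; rewrite big_seq1 /= mul1r /a opprB addrC subrK; exact: hb.
Qed.

Lemma formATF (R : comPzRingType) (I : R -> Prop) m (f : 'I_m -> R) :
  (forall x, gen_ideal f x -> I x) ->
  (forall n x, vpow I n x -> ideal_pow I n.+2 (\sum_i x i * f i) ->
     form_module I (syzygy f) n x) ->
  aluffi_tf (gen_ideal f) I.
Proof.
move=> hJ hS n n0 y; split.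
- move=> [[c hc] hy].
  have key : forall d, (d <= n.-1)%N ->
      exists c' : 'I_m -> R, vpow I d c' /\ y = \sum_i c' i * f i.
    elim=> [_|d IH hd]; first by exists c.
    have [c' [hc' hy']] := IH (ltnW hd).
    have hd2 : (d.+2 <= n)%N by rewrite -(prednK n0) ltnS.
    have hy2 : ideal_pow I d.+2 (\sum_i c' i * f i) by rewrite -hy'; exact: ideal_pow_le hd2 hy.
    have [_ [s [hs hr]]] := hS d c' hc' hy2.
    exists (fun i => c' i - \sum_(t <- s) t.1.2 * t.2 i); split; first exact: hr.
    have E := @sum_syz _ _ f s (fun t ht => let: And5 _ _ h _ _ := hs t ht in h).
    rewrite hy'; transitivity (\sum_i c' i * f i - \sum_i (\sum_(t <- s) t.1.2 * t.2 i) * f i).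
      by rewrite E subr0.
    by rewrite -sumrB; apply: eq_bigr => i _; rewrite mulrBl.
  have [c' [hc' ->]] := key n.-1 (leqnn _).
  exists [seq (f i, c' i) | i <- enum 'I_m]; split.
    by move=> p /mapP [i _ ->] /=; split; [exact: gen_f | exact: hc'].
  rewrite big_map big_enum /=; apply: eq_bigr => i _; exact: mulrC.
- move=> [s [hs ->]]; rewrite big_seq; split.
  + apply: ideal_sum; first exact: gen_ideal_is_ideal.
    move=> p ps; case: (gen_ideal_is_ideal _ _ f) => _ _ hM.
    rewrite mulrC; apply: hM; exact: (hs p ps).1.
  + apply: ideal_sum; first exact: ideal_pow_is_ideal.
    move=> p ps; have [h1 h2] := hs p ps.
    rewrite -(prednK n0) -addn1 mulrC; apply: ideal_pow_mul => //.
    exact: ideal_pow1 (hJ _ h1).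
Qed.

Arguments formS {R I m f n x}.
Arguments Cfg {R I m f g n x}.
Arguments Sform {R I m f n x}.
Arguments formATF {R I m f}.

Theorem corollary2p8 (R : comPzRingType) (I : R -> Prop) (m : nat)
    (f g : 'I_m -> R) :
  noetherian R ->
  is_ideal I ->
  (forall x, gen_ideal f x -> I x) ->
  (forall x, gen_ideal g x -> I x) ->
  (forall i, ideal_pow I 2 (f i - g i)) ->
  aluffi_tf (gen_ideal f) I ->
  (aluffi_tf (gen_ideal g) I <->
   (forall (n : nat) (x : 'I_m -> R),
      form_module I (syzygy f) n x <-> form_module I (syzygy g) n x)).
Proof.
move=> _ _ hJf hJg hfg hAf.
have hfI : forall i, I (f i) by move=> i; apply: hJf; exact: gen_f.
have hgI : forall i, I (g i) by move=> i; apply: hJg; exact: gen_f.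
have hgf : forall i, ideal_pow I 2 (g i - f i).
  by move=> i; rewrite -opprB -mulN1r; apply: ideal_pow_scal.
split.
- move=> hAg n x; split => h.
  + have [hx hs] := formS hfI h; exact: Sform hAg hx (Cfg hfg hx hs).
  + have [hx hs] := formS hgI h; exact: Sform hAf hx (Cfg hgf hx hs).
- move=> hEq; apply: formATF hJg _ => n x hx hs.
  apply/hEq; exact: Sform hAf hx (Cfg hgf hx hs).
Qed.
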